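(* If $\phi^{\alpha_1\cdots\alpha_n}\in\mathcal F$, then $\dfrac{\partial\phi^{\alpha_1\cdots\alpha_n}}{\partial\mu_\beta}\in\mathcal F$.
   Context: Work in 4-dimensional Minkowski space with metric $g_{\alpha\beta}$ of signature $(-,+,+,+)$; indices are raised and lowered with $g$ and repeated indices are summed. $\lambda$ is a real scalar, $\mu_\beta$ is a time-like covector and $\gamma=\sqrt{-\mu^\alpha\mu_\alpha}>0$. The family $\mathcal F$ consists of the (smooth) Lorentz-covariant (isotropic) tensor-valued functions $\phi^{\alpha_1\cdots\alpha_n}(\lambda,\mu_\beta)$ which are totally symmetric in their indices and whose derivative $\partial\phi^{\alpha_1\cdots\alpha_n}/\partial\mu_\beta$ is totally symmetric in $\alpha_1,\dots,\alpha_n,\beta$. *)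

(* Defs.v *)
From HB Require Import structures.
From mathcomp Require Import all_boot all_order all_algebra all_fingroup.
From mathcomp Require Import all_classical all_reals all_analysis.
Set Implicit Arguments. Unset Strict Implicit. Unset Printing Implicit Defensive.
Import Order.TTheory GRing.Theory Num.Theory.
Import numFieldNormedType.Exports.
Local Open Scope classical_set_scope.
Local Open Scope ring_scope.

Section Defs.
Variable R : realType.

Definition minkowski : 'M[R]_4 :=
  \matrix_(i, j) (if i == j then (if i == ord0 then -1 else 1) else 0).

(* g-square of a covector mu_beta (row vector of components):
   mu^alpha mu_alpha = g^{alpha beta} mu_alpha mu_beta (g^{-1} = g). *)
Definition msq (mu : 'rV[R]_4) : R := (mu *m minkowski *m mu^T) ord0 ord0.

Definition timelike (mu : 'rV[R]_4) : Prop := msq mu < 0.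

(* Lorentz transformations Lambda^alpha_beta (entry (alpha,beta)):
   Lambda^T g Lambda = g (full Lorentz group O(1,3)). *)
Definition lorentz (L : 'M[R]_4) : Prop := L^T *m minkowski *m L = minkowski.

(* A tensor-valued function phi^{alpha_1 ... alpha_n}(lambda, mu_beta):
   its components are indexed by maps 'I_n -> 'I_4. *)
Definition tfun (n : nat) := R -> 'rV[R]_4 -> ('I_n -> 'I_4) -> R.

(* Partial derivatives of a scalar function f(lambda, mu) with respect to
   lambda (None) or to the component mu_j (Some j). *)
Definition line (d : option 'I_4) (f : R -> 'rV[R]_4 -> R) (l : R)
    (m : 'rV[R]_4) : R -> R :=
  match d with
  | None => fun t => f (l + t) m
  | Some j => fun t => f l (m + t *: delta_mx ord0 j)
  end.

Definition pd (d : option 'I_4) (f : R -> 'rV[R]_4 -> R) : R -> 'rV[R]_4 -> R :=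
  fun l m => derive1 (line d f l m) 0.

Definition has_pd (d : option 'I_4) (f : R -> 'rV[R]_4 -> R) l m : Prop :=
  derivable (line d f l m) 0 1.

Definition dom : set (R * 'rV[R]_4) := [set p | timelike p.2].

Definition smooth (f : R -> 'rV[R]_4 -> R) : Prop :=
  forall s : seq (option 'I_4),
    let g := foldr pd f s in
    (forall (d : option 'I_4) (p : R * 'rV[R]_4), dom p -> has_pd d g p.1 p.2) /\
    (forall p : R * 'rV[R]_4, dom p ->
       {for p, continuous (fun q : R * 'rV[R]_4 => g q.1 q.2)}).

Definition covariant n (phi : tfun n) : Prop :=
  forall (L : 'M[R]_4) (l : R) (mu : 'rV[R]_4), lorentz L -> timelike mu ->
  forall a : 'I_n -> 'I_4,
    phi l (mu *m invmx L) a =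
    \sum_(b : {ffun 'I_n -> 'I_4}) (\prod_(i < n) L (a i) (b i)) * phi l mu b.

Definition tsym n (phi : tfun n) : Prop :=
  forall (l : R) (mu : 'rV[R]_4), timelike mu ->
  forall (s : 'S_n) (a : 'I_n -> 'I_4), phi l mu (a \o s) = phi l mu a.

(* The derivative d phi^{alpha_1..alpha_n} / d mu_beta, as an (n+1)-index
   tensor function with beta as the last index. *)
Definition dmu n (phi : tfun n) : tfun n.+1 :=
  fun l mu a =>
    pd (Some (a ord_max)) (fun l' mu' => phi l' mu' (fun i => a (widen_ord (leqnSn n) i))) l mu.

Definition inF n (phi : tfun n) : Prop :=
  [/\ forall a, smooth (fun l mu => phi l mu a),
      covariant phi,
      tsym phi &
      tsym (dmu phi)].

End Defs.

(* Main.v *)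
Require Import Defs.
From HB Require Import structures.
From mathcomp Require Import all_boot all_order all_algebra all_fingroup.
From mathcomp Require Import all_classical all_reals all_analysis.
From mathcomp Require Import ring lra.
Set Implicit Arguments. Unset Strict Implicit. Unset Printing Implicit Defensive.
Import Order.TTheory GRing.Theory Num.Theory.
Import numFieldNormedType.Exports.
Local Open Scope classical_set_scope.
Local Open Scope ring_scope.
Lemma dq_shift (R : realType) (g : R -> R) (s : R) :
  (fun h : R => h^-1 *: ((g \o shift s) (h *: 1) - g s)) =
  (fun h : R => h^-1 *: (((fun t => g (s + t)) \o shift 0) (h *: 1) - g (s + 0))).
Proof. by apply/funext => h /=; rewrite !addr0 (addrC s). Qed.

Lemma is_derive_shiftP (R : realType) (g : R -> R) (s d : R) :
  is_derive (0:R) (1:R) (fun t => g (s + t)) d -> is_derive s (1:R) g d.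
Proof.
case=> H1 H2; split; first by rewrite /derivable dq_shift.
by rewrite -H2 /derive dq_shift.
Qed.
Lemma MVI (R : realType) (g dg : R -> R) (x M : R) :
  (forall s, `|s| <= `|x| -> is_derive s (1:R) g (dg s)) ->
  (forall s, `|s| <= `|x| -> `|dg s| <= M) -> `|g x - g 0| <= M * `|x|.
Proof.
move=> Hd HM.
have key : forall a b, a <= b -> `|a| <= `|x| -> `|b| <= `|x| ->
    `|g b - g a| <= M * (b - a).
  move=> a b ab ha hb.
  have inab : forall c, c \in `[a, b]%R -> `|c| <= `|x|.
    move=> c; rewrite in_itv /= => /andP[ac cb].
    rewrite ler_norml; move: ha hb; rewrite !ler_norml => /andP[h1 h2] /andP[h3 h4].
    apply/andP; split; [exact: le_trans h1 ac| exact: le_trans cb h4].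
  have [c cab ->] := @MVT_segment R g dg a b ab
     (fun y hy => Hd y (inab y (subset_itv_oo_cc hy)))
     (derivable_within_continuous (fun y hy => @ex_derive _ _ _ _ _ _ _ (Hd y (inab y hy)))).
  rewrite normrM (@ger0_norm _ (b - a)) ?subr_ge0 //.
  by apply: ler_wpM2r; [rewrite subr_ge0|exact: HM (inab c cab)].
case: (lerP 0 x) => x0.
  by have := key 0 x x0; rewrite normr0 subr0 (ger0_norm x0) => ->.
have := key x 0 (ltW x0) (lexx _); rewrite normr0 sub0r (ltr0_norm x0) distrC.
move=> H; apply: H; by rewrite oppr_ge0 ltW.
Qed.
Lemma cont_ext (R : realType) (F : R * 'rV[R]_4 -> R) l mu :
  {for (l, mu), continuous F} -> forall eps : R, 0 < eps ->
  exists2 d : R, 0 < d & forall nu : 'rV[R]_4,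
    (forall i, `|nu ord0 i - mu ord0 i| < d) -> `|F (l, nu) - F (l, mu)| < eps.
Proof.
move=> c eps e0.
move/cvgrPdist_lt: c => /(_ eps e0) /nbhs_ballP [d /= d0 Hd].
exists d => // nu Hnu; rewrite distrC; apply: (Hd (l, nu)).
split => /=; first exact: ballxx.
split => // i j; rewrite (ord1 i) /ball /= distrC; exact: Hnu.
Qed.
Lemma msqE (R : realType) (mu : 'rV[R]_4) :
  msq mu = \sum_i (if i == ord0 then -1 else 1) * mu ord0 i ^+ 2.
Proof.
rewrite /msq mxE; apply: eq_bigr => k _.
rewrite !mxE (bigD1 k) //= big1 => [|i ik]; last by rewrite !mxE (negbTE ik) mulr0.
by rewrite !mxE eqxx addr0 mulrC mulrA expr2 mulrC.
Qed.

Lemma timelike_open (R : realType) (mu : 'rV[R]_4) : timelike mu ->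
  exists2 d : R, 0 < d & forall nu : 'rV[R]_4,
    (forall i, `|nu ord0 i - mu ord0 i| < d) -> timelike nu.
Proof.
rewrite /timelike => tm.
set a := - msq mu.
have a0 : 0 < a by rewrite oppr_gt0.
set K := \sum_(i < 4) (2 * `|mu ord0 i| + 1).
have K0 : 0 <= K by apply: sumr_ge0 => i _; rewrite addr_ge0 // mulr_ge0.
set q := a / (2 * K + 2).
have K2 : 0 < 2 * K + 2 by rewrite ltr_wpDl ?mulr_ge0.
have q0 : 0 < q by rewrite divr_gt0.
have qa : q * (2 * K + 2) = a by rewrite /q divfK // gt_eqF.
exists (Num.min 1 q); first by rewrite lt_min ltr01 q0.
move=> nu Hnu.
have d1 : Num.min 1 q <= 1 by rewrite ge_min lexx.
have dq : Num.min 1 q <= q by rewrite ge_min lexx orbT.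
have bnd : `|msq nu - msq mu| <= Num.min 1 q * K.
  rewrite !msqE -sumrB /K mulr_sumr.
  apply: le_trans (ler_norm_sum _ _ _) _; apply: ler_sum => i _.
  rewrite -mulrBr normrM.
  have -> : `|(if i == ord0 then -1 else 1) : R| = 1 by case: (i == ord0); rewrite ?normrN normr1.
  rewrite mul1r subr_sqr normrM mulrC.
  have h1 := Hnu i.
  have h2 : `|nu ord0 i + mu ord0 i| <= 2 * `|mu ord0 i| + 1.
    have -> : nu ord0 i + mu ord0 i = (nu ord0 i - mu ord0 i) + 2 * mu ord0 i.
      by ring.
    apply: le_trans (ler_normD _ _) _; rewrite normrM (ger0_norm (ler0n _ 2)) addrC lerD2l.
    exact: le_trans (ltW h1) d1.
  rewrite [X in X <= _]mulrC; apply: ler_pM => //; exact: ltW.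
have dK : Num.min 1 q * K <= q * K by apply: ler_wpM2r.
have : msq nu <= msq mu + q * K.
  have := le_trans (ler_norm _) (le_trans bnd dK); rewrite lerBlDl => h; exact: h.
move=> h; apply: (le_lt_trans h).
rewrite -ltrBrDl sub0r -/a -qa.
have : 0 <= q * K by rewrite mulr_ge0 // ltW.
nra.
Qed.
Definition ev (R : realType) (k : 'I_4) : 'rV[R]_4 := delta_mx ord0 k.
Definition Dk (R : realType) (f : 'rV[R]_4 -> R) k nu :=
  derive1 (fun t : R => f (nu + t *: ev R k)) 0.
Definition close (R : realType) (nu mu : 'rV[R]_4) (d : R) :=
  forall i, `|nu ord0 i - mu ord0 i| < d.

Lemma fin_delta (R : realType) (P : 'I_4 -> R -> Prop) :
  (forall k, exists2 d, 0 < d & P k d) ->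
  (forall k d d', 0 < d' -> d' <= d -> P k d -> P k d') ->
  exists2 d, 0 < d & forall k, P k d.
Proof.
move=> H M.
have [D HD] : exists D : 'I_4 -> R, forall k, 0 < D k /\ P k (D k).
  have [D HD] := boolp.choice (fun k => let: ex_intro2 d h1 h2 := H k in ex_intro _ d (conj h1 h2)).
  by exists D.
exists (\big[Num.min/1]_k D k).
  by elim/big_ind: _ => //[x y x0 y0|k _]; [rewrite lt_min x0 y0 | case: (HD k)].
move=> k; case: (HD k) => D0 PD; apply: M PD => //; last exact: bigmin_le.
by elim/big_ind: _ => //[x y x0 y0|i _]; [rewrite lt_min x0 y0 | case: (HD i)].
Qed.

Lemma close_mono (R : realType) (nu mu : 'rV[R]_4) d d' :
  d <= d' -> close nu mu d -> close nu mu d'.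
Proof. by move=> dd c i; exact: lt_le_trans (c i) dd. Qed.

Lemma line_deriv (R : realType) (f : 'rV[R]_4 -> R) k (b : 'rV[R]_4) s :
  derivable (fun t : R => f ((b + s *: ev R k) + t *: ev R k)) 0 1 ->
  is_derive s (1:R) (fun t => f (b + t *: ev R k)) (Dk f k (b + s *: ev R k)).
Proof.
move=> H; apply: is_derive_shiftP => /=.
have -> : (fun t => f (b + (s + t) *: ev R k)) =
   (fun t => f ((b + s *: ev R k) + t *: ev R k)).
  by apply/funext => t; rewrite scalerDl addrA.
rewrite /Dk derive1E; exact: derivableP.
Qed.

Lemma MVI' (R : realType) (g dg : R -> R) (x c M : R) :
  (forall s, `|s| <= `|x| -> is_derive s (1:R) g (dg s)) ->
  (forall s, `|s| <= `|x| -> `|dg s - c| <= M) -> `|g x - g 0 - x * c| <= M * `|x|.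
Proof.
move=> Hd HM.
have := @MVI R (fun s => g s - s * c) (fun s => dg s - c) x M _ HM.
rewrite mul0r subr0 addrAC; apply => s hs.
have H := Hd s hs.
apply: is_deriveB.
have := @is_deriveM R R id (cst c) s 1 1 0 (is_derive_id _ _) (is_derive_cst _ _ _).
by rewrite scaler0 add0r [c *: _]mulr1.
Qed.
Definition pref (R : realType) (w : 'rV[R]_4) (k : nat) : 'rV[R]_4 :=
  \row_i (if (i < k)%N then w ord0 i else 0).

Lemma pref_step (R : realType) (w : 'rV[R]_4) (k : 'I_4) :
  pref w k.+1 = pref w k + w ord0 k *: ev R k.
Proof.
apply/rowP => i; rewrite !mxE ltnS leq_eqVlt.
case: (eqVneq i k) => [->|ik] /=; first by rewrite ltnn eqxx mulr1 add0r.
have : (nat_of_ord i == nat_of_ord k) = false by apply/negbTE; exact: ik.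
by move=> ->; rewrite /= mulr0 addr0.
Qed.

Lemma pref_entry (R : realType) (w : 'rV[R]_4) (k : 'I_4) (h s S : R) i :
  (forall j, `|w ord0 j| <= S) -> `|s| <= `|h * w ord0 k| ->
  `|h * pref w k ord0 i + s * ev R k ord0 i| <= `|h| * S.
Proof.
move=> wS hs; rewrite !mxE.
case: (eqVneq i k) => [->|ik].
  by rewrite ltnn mulr0 add0r eqxx mulr1; apply: le_trans hs _; rewrite normrM ler_wpM2l.
rewrite andbF mulr0 addr0.
case: (ltnP i k) => _; last by rewrite mulr0 normr0 mulr_ge0 //; exact: le_trans (normr_ge0 _) (wS i).
by rewrite normrM ler_wpM2l.
Qed.

Lemma dir_deriv (R : realType) (f : 'rV[R]_4 -> R) (mu w : 'rV[R]_4) :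
  timelike mu ->
  (forall k nu, timelike nu -> derivable (fun t : R => f (nu + t *: ev R k)) 0 1) ->
  (forall k eps, 0 < eps -> exists2 d, 0 < d &
      forall nu, close nu mu d -> `|Dk f k nu - Dk f k mu| < eps) ->
  is_derive (0:R) (1:R) (fun t => f (mu + t *: w)) (\sum_k w ord0 k * Dk f k mu).
Proof.
move=> tm Hd Hc.
set L := \sum_k _.
set F := fun t : R => f (mu + t *: w).
suff cv : (fun h : R => h^-1 *: ((F \o shift 0) (h *: 1) - F 0)) @ 0^' --> L.
  split; [by apply/cvg_ex; exists L | by rewrite /derive; apply: cvg_lim].
apply/cvgrPdist_lt => eps e0.
set S := \sum_j `|w ord0 j|.
have S0 : 0 <= S by apply: sumr_ge0.
have wS : forall j, `|w ord0 j| <= S.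
  by move=> j; rewrite /S (bigD1 j) //= lerDl sumr_ge0.
have S1 : 0 < S + 1 by rewrite ltr_wpDl.
set e' := eps / (S + 1).
have e'0 : 0 < e' by rewrite divr_gt0.
have [d0 d00 Hopen] := timelike_open tm.
set P := (fun k d => d <= d0 /\ forall nu, close nu mu d ->
     `|Dk f k nu - Dk f k mu| <= e').
have H1 : forall k, exists2 d, 0 < d & P k d.
  move=> k; have [dk dk0 Hk] := Hc k e' e'0; exists (Num.min dk d0).
    by rewrite lt_min dk0 d00.
  split; first by rewrite ge_min lexx orbT.
  move=> nu cl; apply: ltW; apply: Hk; apply: close_mono cl; by rewrite ge_min lexx.
have H2 : forall k d d', 0 < d' -> d' <= d -> P k d -> P k d'.
  move=> k d1 d2 d20 d21 [h1 h2]; split; first exact: le_trans d21 h1.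
  move=> nu cl; apply: h2; exact: close_mono cl.
have [d dpos Hall] := @fin_delta R P H1 H2.
have dd0 : d <= d0 by case: (Hall ord0).
rewrite near_withinE; apply/nbhs_ballP; exists (d / (S + 1)) => /=; first by rewrite divr_gt0.
move=> h hb hn0.
have hlt : `|h| * S < d.
  move: hb; rewrite /ball /= sub0r normrN ltr_pdivlMr // => hb.
  apply: le_lt_trans hb; apply: ler_wpM2l => //; by rewrite lerDl.
have key : `|F h - F 0 - h * L| <= e' * (`|h| * S).
  set G := fun k : nat => f (mu + h *: pref w k).
  have FG4 : F h = G 4%N.
    by rewrite /F /G; congr (f (_ + _ *: _)); apply/rowP => i; rewrite mxE ltn_ord.
  have FG0 : F 0 = G 0%N.
    rewrite /F /G scale0r; congr (f (_ + _)); apply/esym.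
    by rewrite (_ : pref w 0 = 0) ?scaler0 //; apply/rowP => i; rewrite !mxE.
  rewrite FG4 FG0 -(telescope_sumr _ (leq0n 4)) big_mkord /L mulr_sumr -sumrB.
  apply: le_trans (ler_norm_sum _ _ _) _.
  rewrite /S !mulr_sumr; apply: ler_sum => k _.
  set b := mu + h *: pref w k.
  have Gk1 : G k.+1 = f (b + (h * w ord0 k) *: ev R k).
    by rewrite /G pref_step scalerDr scalerA addrA.
  have Gk : G k = f (b + 0 *: ev R k) by rewrite scale0r addr0.
  rewrite Gk1 Gk mulrA -normrM.
  have cl : forall s, `|s| <= `|h * w ord0 k| -> close (b + s *: ev R k) mu d.
    move=> s hs i.
    have -> : (b + s *: ev R k) ord0 i - mu ord0 i =
        h * pref w k ord0 i + s * ev R k ord0 i.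
      by rewrite /b !mxE; ring.
    apply: le_lt_trans hlt; exact: pref_entry.
  apply: (@MVI' R (fun t => f (b + t *: ev R k)) (fun t => Dk f k (b + t *: ev R k))).
    move=> s hs; apply: line_deriv; apply: Hd; apply: Hopen.
    exact: close_mono dd0 (cl s hs).
  move=> s hs; case: (Hall k) => _ Hk; exact: Hk (cl s hs).
rewrite addr0 [h%:A]mulr1.
have -> : L - h^-1 *: (F h - F 0) = - (h^-1 * (F h - F 0 - h * L)).
  by rewrite mulrBr mulrA mulVf // mul1r opprB.
rewrite normrN normrM normfV.
apply: (le_lt_trans (ler_wpM2l _ key)); first by rewrite invr_ge0.
rewrite mulrCA mulKf ?normr_eq0 //.
by rewrite /e' mulrAC ltr_pdivrMr // ltr_pM2l // ltrDl ltr01.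
Qed.
Lemma close_two (R : realType) (mu : 'rV[R]_4) j k (s u h d : R) :
  `|s| <= h -> `|u| <= h -> 2 * h < d ->
  close (mu + s *: ev R j + u *: ev R k) mu d.
Proof.
move=> hs hu hd i.
have -> : (mu + s *: ev R j + u *: ev R k) ord0 i - mu ord0 i =
    s * ev R j ord0 i + u * ev R k ord0 i by rewrite !mxE; ring.
apply: le_lt_trans hd; apply: le_trans (ler_normD _ _) _.
rewrite mulr2n mulrDl mul1r; apply: lerD; rewrite normrM !mxE /=.
  by case: (i == j); rewrite ?normr1 ?normr0 ?mulr1 ?mulr0 // (le_trans (normr_ge0 s) hs).
by case: (i == k); rewrite ?normr1 ?normr0 ?mulr1 ?mulr0 // (le_trans (normr_ge0 u) hu).
Qed.

Lemma schwarz_half (R : realType) (f : 'rV[R]_4 -> R) (mu : 'rV[R]_4) j k (A eps h d : R) :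
  0 < h -> 2 * h < d -> (forall nu, close nu mu d -> timelike nu) ->
  (forall k nu, timelike nu -> derivable (fun t : R => f (nu + t *: ev R k)) 0 1) ->
  (forall j k nu, timelike nu -> derivable (fun t : R => Dk f j (nu + t *: ev R k)) 0 1) ->
  (forall nu, close nu mu d -> `|Dk (Dk f j) k nu - A| <= eps) ->
  `|f (mu + h *: ev R k + h *: ev R j) - f (mu + h *: ev R j) - f (mu + h *: ev R k)
     + f mu - h * h * A| <= eps * h * h.
Proof.
move=> h0 hd Hopen Hd1 Hd2 HA.
have cl : forall s u, `|s| <= h -> `|u| <= h -> close (mu + s *: ev R j + u *: ev R k) mu d.
  by move=> s u hs hu; apply: close_two hs hu hd.
have tl : forall s u, `|s| <= h -> `|u| <= h -> timelike (mu + s *: ev R j + u *: ev R k).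
  by move=> s u hs hu; apply: Hopen; apply: cl.
have hh : `|h| = h by rewrite gtr0_norm.
set b1 := mu + h *: ev R k.
set phi := fun s => f (b1 + s *: ev R j) - f (mu + s *: ev R j).
set dphi := fun s => Dk f j (b1 + s *: ev R j) - Dk f j (mu + s *: ev R j).
have Hphi := @MVI' R phi dphi h (h * A) (eps * h).
have E1 : phi h - phi 0 - h * (h * A) = f (mu + h *: ev R k + h *: ev R j) - f (mu + h *: ev R j) - f (mu + h *: ev R k)
     + f mu - h * h * A.
  by rewrite /phi !scale0r !addr0 mulrA; ring.
rewrite -E1; move: Hphi; rewrite hh -mulrA; apply.
  move=> s hs.
  have H1 : is_derive s (1:R) (fun t => f (b1 + t *: ev R j)) (Dk f j (b1 + s *: ev R j)).
    apply: line_deriv; apply: Hd1; rewrite /b1 addrAC; apply: tl hs _; by rewrite hh.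
  have H2 : is_derive s (1:R) (fun t => f (mu + t *: ev R j)) (Dk f j (mu + s *: ev R j)).
    apply: line_deriv; apply: Hd1; have := tl s 0 hs; rewrite normr0 scale0r addr0; apply; exact: ltW.
  exact: is_deriveB.
move=> s hs.
set psi := fun u => Dk f j ((mu + s *: ev R j) + u *: ev R k).
have E2 : dphi s = psi h - psi 0.
  by rewrite /dphi /psi /b1 scale0r addr0 addrAC.
have := @MVI' R psi (fun u => Dk (Dk f j) k ((mu + s *: ev R j) + u *: ev R k)) h A eps.
rewrite E2 hh mulrC [eps * _]mulrC; apply.
  move=> u hu.
  apply: line_deriv; apply: Hd2; exact: tl.
move=> u hu; apply: HA; exact: cl.
Qed.
Lemma schwarz (R : realType) (f : 'rV[R]_4 -> R) (mu : 'rV[R]_4) j k :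
  timelike mu ->
  (forall k nu, timelike nu -> derivable (fun t : R => f (nu + t *: ev R k)) 0 1) ->
  (forall j k nu, timelike nu -> derivable (fun t : R => Dk f j (nu + t *: ev R k)) 0 1) ->
  (forall j k eps, 0 < eps -> exists2 d, 0 < d &
      forall nu, close nu mu d -> `|Dk (Dk f j) k nu - Dk (Dk f j) k mu| < eps) ->
  Dk (Dk f j) k mu = Dk (Dk f k) j mu.
Proof.
move=> tm Hd1 Hd2 Hc.
set A := Dk (Dk f j) k mu; set B := Dk (Dk f k) j mu.
have key : forall eps, 0 < eps -> `|A - B| <= eps + eps.
  move=> eps e0.
  have [d0 d00 Hopen] := timelike_open tm.
  have [d1 d10 H1] := Hc j k eps e0.
  have [d2 d20 H2] := Hc k j eps e0.
  set d := Num.min d0 (Num.min d1 d2).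
  have dp : 0 < d by rewrite !lt_min d00 d10 d20.
  have dd0 : d <= d0 by rewrite ge_min lexx.
  have dd1 : d <= d1 by rewrite !ge_min lexx orbT.
  have dd2 : d <= d2 by rewrite !ge_min lexx !orbT.
  set h := d / 4.
  have h0 : 0 < h by rewrite divr_gt0.
  have hd : 2 * h < d.
    by rewrite /h mulrA ltr_pdivrMr // mulrC ltr_pM2l // ltr_nat.
  have Ho : forall nu, close nu mu d -> timelike nu.
    by move=> nu c; apply: Hopen; apply: close_mono c.
  have h1 := @schwarz_half R f mu j k A eps h d h0 hd Ho Hd1 Hd2
     (fun nu c => ltW (H1 nu (close_mono dd1 c))).
  have h2 := @schwarz_half R f mu k j B eps h d h0 hd Ho Hd1 Hd2
     (fun nu c => ltW (H2 nu (close_mono dd2 c))).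
  rewrite (addrAC mu) in h2.
  move: h1 h2.
  set X := f (mu + h *: ev R k + h *: ev R j).
  set Y := f (mu + h *: ev R j); set Z := f (mu + h *: ev R k); set W := f mu.
  move=> h1 h2.
  have E : h * h * (A - B) = (X - Z - Y + W - h * h * B) - (X - Y - Z + W - h * h * A).
    by ring.
  have : `|h * h * (A - B)| <= eps * h * h + eps * h * h.
    rewrite E; apply: le_trans (ler_normB _ _) _; exact: lerD h2 h1.
  have c0 : 0 < h * h by rewrite mulr_gt0.
  have -> : eps * h * h + eps * h * h = (h * h) * (eps + eps) by ring.
  by rewrite normrM (gtr0_norm c0) ler_pM2l.
have := normr_ge0 (A - B); case: (eqVneq `|A - B| 0) => [/eqP|ne _].
  by rewrite normr_eq0 subr_eq0 => /eqP.
have xp : 0 < `|A - B| by rewrite lt_def ne normr_ge0.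
have := key (`|A - B| / 4) (divr_gt0 xp (ltr0n _ 4)).
move=> hx; move: xp hx; set x := `|A - B|; clearbody x.
clear -x; move=> xp hx; exfalso; lra.
Qed.
Lemma near_line (R : realType) (mu w : 'rV[R]_4) : timelike mu ->
  \forall t \near (0 : R), timelike (mu + t *: w).
Proof.
move=> tm; have [d0 d00 Hopen] := timelike_open tm.
set S := \sum_j `|w ord0 j|.
have S0 : 0 <= S by apply: sumr_ge0.
have wS : forall j, `|w ord0 j| <= S.
  by move=> j; rewrite /S (bigD1 j) //= lerDl sumr_ge0.
have S1 : 0 < S + 1 by rewrite ltr_wpDl.
apply/nbhs_ballP; exists (d0 / (S + 1)) => /=; first by rewrite divr_gt0.
move=> t; rewrite /ball /= sub0r normrN ltr_pdivlMr // => ht.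
apply: Hopen => i; rewrite !mxE addrAC subrr add0r normrM.
apply: le_lt_trans ht; apply: le_trans (_ : `|t| * S <= _); first by apply: ler_wpM2l.
by apply: ler_wpM2l => //; rewrite lerDl.
Qed.

Lemma pd_local (R : realType) (F G : R -> 'rV[R]_4 -> R) k l mu :
  timelike mu -> (forall nu, timelike nu -> F l nu = G l nu) ->
  pd (Some k) F l mu = pd (Some k) G l mu.
Proof.
move=> tm H; rewrite /pd !derive1E; apply: near_eq_derive.
have := near_line (ev R k) tm; apply: filterS => t tt /=.
exact: H.
Qed.

Lemma sm_d1 (R : realType) (F : R -> 'rV[R]_4 -> R) l : smooth F ->
  forall k nu, timelike nu -> derivable (fun t : R => F l (nu + t *: ev R k)) 0 1.
Proof. by move=> H k nu tn; case: (H [::]) => H1 _; exact: (H1 (Some k) (l, nu) tn). Qed.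

Lemma sm_d2 (R : realType) (F : R -> 'rV[R]_4 -> R) l : smooth F ->
  forall j k nu, timelike nu -> derivable (fun t : R => Dk (F l) j (nu + t *: ev R k)) 0 1.
Proof. by move=> H j k nu tn; case: (H [:: Some j]) => H1 _; exact: (H1 (Some k) (l, nu) tn). Qed.

Lemma sm_c1 (R : realType) (F : R -> 'rV[R]_4 -> R) l mu : smooth F -> timelike mu ->
  forall k eps, 0 < eps -> exists2 d, 0 < d &
      forall nu, close nu mu d -> `|Dk (F l) k nu - Dk (F l) k mu| < eps.
Proof.
move=> H tm k eps e0; case: (H [:: Some k]) => _ H2.
exact: (cont_ext (H2 (l, mu) tm) e0).
Qed.

Lemma sm_c2 (R : realType) (F : R -> 'rV[R]_4 -> R) l mu : smooth F -> timelike mu ->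
  forall j k eps, 0 < eps -> exists2 d, 0 < d &
      forall nu, close nu mu d -> `|Dk (Dk (F l) j) k nu - Dk (Dk (F l) j) k mu| < eps.
Proof.
move=> H tm j k eps e0; case: (H [:: Some k; Some j]) => _ H2.
exact: (cont_ext (H2 (l, mu) tm) e0).
Qed.
Lemma dmu_ext (R : realType) n (psi : tfun R n) l mu (a b : 'I_n.+1 -> 'I_4) :
  timelike mu -> a ord_max = b ord_max ->
  (forall nu, timelike nu -> psi l nu (fun i => a (widen_ord (leqnSn n) i)) =
                              psi l nu (fun i => b (widen_ord (leqnSn n) i))) ->
  dmu psi l mu a = dmu psi l mu b.
Proof.
move=> tm hm H; rewrite /dmu hm.
by apply: pd_local => // nu tn; exact: H.
Qed.

Lemma dd_unfold (R : realType) n (phi : tfun R n) l mu (a : 'I_n.+2 -> 'I_4) :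
  dmu (dmu phi) l mu a =
  Dk (Dk (fun nu => phi l nu (fun i => a (widen_ord (leqnSn n.+1) (widen_ord (leqnSn n) i))))
        (a (widen_ord (leqnSn n.+1) ord_max))) (a ord_max) mu.
Proof. by []. Qed.

Lemma widen_surj n (x : 'I_n.+2) : x != ord_max ->
  exists x' : 'I_n.+1, x = widen_ord (leqnSn n.+1) x'.
Proof.
move=> xm.
have xl : (x < n.+1)%N.
  have := ltn_ord x; rewrite ltnS leq_eqVlt => /orP[/eqP e|//].
  by exfalso; move/eqP: xm; apply; apply: val_inj.
by exists (Ordinal xl); apply: val_inj.
Qed.

Lemma tperm_widen n (x y i : 'I_n.+1) :
  tperm (widen_ord (leqnSn n.+1) x) (widen_ord (leqnSn n.+1) y) (widen_ord (leqnSn n.+1) i)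
  = widen_ord (leqnSn n.+1) (tperm x y i).
Proof.
have wi : injective (widen_ord (leqnSn n.+1)) by move=> u v /(congr1 val) /= uv; apply: val_inj.
rewrite !permE /= !(inj_eq wi).
by case: ifP => _ //; case: ifP.
Qed.
Lemma tsym_dd (R : realType) n (phi : tfun R n) :
  (forall a, smooth (fun l mu => phi l mu a)) -> tsym (dmu phi) -> tsym (dmu (dmu phi)).
Proof.
move=> Hs Hsym l mu tm.
pose W := widen_ord (leqnSn n.+1).
pose M : 'I_n.+2 := ord_max.
pose M1 : 'I_n.+2 := W ord_max.
pose inv (s : 'S_n.+2) := forall a : 'I_n.+2 -> 'I_4,
  dmu (dmu phi) l mu (a \o s) = dmu (dmu phi) l mu a.
suff Hall : forall s, inv s by move=> s a; exact: Hall.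
have WM : forall x, W x != M.
  by move=> x; apply/negP => /eqP /(congr1 val) /= e; have := ltn_ord x; rewrite e ltnn.
have M1M : M1 != M by exact: WM.
have invM : forall s t, inv s -> inv t -> inv (s * t)%g.
  move=> s t hs ht a.
  have -> : a \o (s * t)%g = (a \o t) \o s by apply/funext => i; rewrite /= permM.
  by rewrite hs ht.
have inv1 : inv 1%g.
  by move=> a; congr (dmu _ _ _ _); apply/funext => i; rewrite /= perm1.
have invA : forall x y : 'I_n.+1, inv (tperm (W x) (W y)).
  move=> x y a; apply: dmu_ext => //.
    by rewrite /= tpermD // eq_sym WM.
  move=> nu tn.
  have -> : (fun i => (a \o tperm (W x) (W y)) (W i)) = (fun i => a (W i)) \o tperm x y.
    by apply/funext => i; rewrite /= tperm_widen.
  exact: Hsym.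
have invB : inv (tperm M1 M).
  move=> a; rewrite !dd_unfold /=.
  rewrite -/W -/M -/M1 tpermR tpermL.
  have -> : (fun i => a (tperm M1 M (W (widen_ord (leqnSn n) i)))) =
            (fun i => a (W (widen_ord (leqnSn n) i))).
    apply/funext => i; rewrite tpermD //; last by rewrite eq_sym WM.
    apply/negP => /eqP /(congr1 val) /= e; have := ltn_ord i; by rewrite -e ltnn.
  set F := fun l' mu' => phi l' mu' (fun i => a (W (widen_ord (leqnSn n) i))).
  have sF : smooth F by exact: Hs.
  exact: (@schwarz R (F l) mu (a M) (a M1) tm (sm_d1 (l:=l) sF) (sm_d2 (l:=l) sF) (sm_c2 l sF tm)).
have invC : forall z, z != M -> inv (tperm z M).
  move=> z zM; case: (eqVneq z M1) => [->|zM1]; first exact: (invB).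
  have -> : tperm z M = (tperm z M1 * tperm M1 M * tperm z M1)%g.
    have := tpermJ M1 M (tperm z M1).
    rewrite conjgE tpermV tpermR tpermD // ?M1M // => <-.
    by rewrite mulgA.
  have [z' ez] := widen_surj zM; rewrite ez.
  apply: (invM); [apply: (invM); [exact: (invA) | exact: (invB)] | exact: (invA)].
have invT : forall x y, inv (tperm x y).
  move=> x y; case: (eqVneq x M) => [->|xM]; case: (eqVneq y M) => [->|yM].
  - by rewrite tperm1.
  - by rewrite tpermC; exact: (invC).
  - exact: (invC).
  - have [x' ->] := widen_surj xM; have [y' ->] := widen_surj yM; exact: (invA).
move=> s; case: (prod_tpermP s) => ts -> _; elim: ts => [|t ts IH].
  by rewrite big_nil.
by rewrite big_cons; apply: (invM).
Qed.
Lemma mink_sq (R : realType) : Defs.minkowski R *m Defs.minkowski R = 1%:M.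
Proof.
apply/matrixP => i k; rewrite !mxE (bigD1 i) //= big1 => [|m mi]; last first.
  by rewrite !mxE eq_sym (negbTE mi) mul0r.
rewrite !mxE eqxx addr0; case: (i == k); last by rewrite mulr0.
by case: (i == ord0); rewrite ?mulrNN mulr1.
Qed.

Lemma lorentz_unit (R : realType) (L : 'M[R]_4) : lorentz L -> L \in unitmx.
Proof.
move=> HL.
have : (Defs.minkowski R *m L^T *m Defs.minkowski R) *m L = 1%:M.
  by rewrite -!mulmxA (mulmxA L^T) HL mink_sq.
by case/mulmx1_unit.
Qed.

Lemma is_derive_bigsum (R : realType) (I : finType) (F : I -> R -> R) (dF : I -> R) (x : R) :
  (forall i, is_derive x (1:R) (F i) (dF i)) ->
  is_derive x (1:R) (fun t => \sum_i F i t) (\sum_i dF i).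
Proof.
move=> H.
suff : forall r : seq I, is_derive x (1:R) (fun t => \sum_(i <- r) F i t) (\sum_(i <- r) dF i).
  by apply.
elim=> [|i r IH].
  have -> : (fun t => \sum_(i <- [::]) F i t) = cst 0 by apply/funext => t; rewrite big_nil.
  rewrite big_nil; exact: is_derive_cst.
have -> : (fun t => \sum_(j <- i :: r) F j t) = F i + (fun t => \sum_(j <- r) F j t).
  by apply/funext => t; rewrite big_cons.
rewrite big_cons; have Hi := H i; exact: is_deriveD.
Qed.

Definition extf n (b : {ffun 'I_n -> 'I_4}) (k : 'I_4) : {ffun 'I_n.+1 -> 'I_4} :=
  [ffun i => if unlift ord_max i is Some i' then b i' else k].

Lemma widen_lift n (i : 'I_n) : widen_ord (leqnSn n) i = lift ord_max i.
Proof. apply: val_inj; exact: (esym (lift_max i)). Qed.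

Lemma extf_widen n b k (i : 'I_n) : extf b k (widen_ord (leqnSn n) i) = b i.
Proof. by rewrite ffunE widen_lift liftK. Qed.

Lemma extf_max n b k : @extf n b k ord_max = k.
Proof. by rewrite ffunE unlift_none. Qed.

Lemma sum_ffun_split (R : realType) n (G : {ffun 'I_n.+1 -> 'I_4} -> R) :
  \sum_b G b = \sum_(b : {ffun 'I_n -> 'I_4}) \sum_(k : 'I_4) G (extf b k).
Proof.
rewrite pair_big /=.
rewrite (reindex (fun p : {ffun 'I_n -> 'I_4} * 'I_4 => extf p.1 p.2)) //.
apply: onW_bij.
exists (fun b : {ffun 'I_n.+1 -> 'I_4} => ([ffun i => b (widen_ord (leqnSn n) i)], b ord_max)).
  case=> b k /=; rewrite extf_max; congr pair.
  by apply/ffunP => i; rewrite ffunE extf_widen.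
move=> b; apply/ffunP => i; rewrite ffunE /=.
case: unliftP => [j ->|->] /=; last by [].
by rewrite ffunE widen_lift.
Qed.
Lemma cov_dmu (R : realType) n (phi : tfun R n) :
  (forall a, smooth (fun l mu => phi l mu a)) -> covariant phi -> covariant (dmu phi).
Proof.
move=> Hs Hcov L l mu HL tm a.
have Lu := lorentz_unit HL.
pose W := widen_ord (leqnSn n).
set j := a ord_max.
pose a' := fun i => a (W i).
pose w := row j L.
pose c := fun b' : {ffun 'I_n -> 'I_4} => \prod_(i < n) L (a' i) (b' i).
pose D := fun (b' : {ffun 'I_n -> 'I_4}) k => Dk (fun nu => phi l nu b') k mu.
have LHS : dmu phi l (mu *m invmx L) a = \sum_b' c b' * \sum_k w ord0 k * D b' k.
  rewrite /dmu /pd derive1E -/j.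
  rewrite (@near_eq_derive _ _ _ _ (fun t : R => \sum_b' c b' * phi l (mu + t *: w) b')).
    have HD : is_derive (0:R) (1:R) (fun t => \sum_b' c b' * phi l (mu + t *: w) b')
                (\sum_b' c b' * \sum_k w ord0 k * D b' k).
      apply: is_derive_bigsum => b'.
      have := @dir_deriv R (fun nu => phi l nu b') mu w tm (sm_d1 (l:=l) (Hs b')) (sm_c1 l (Hs b') tm).
      move=> H; exact: is_deriveZ.
    exact: derive_val.
  have := near_line w tm; apply: filterS => t tt /=.
  rewrite -(Hcov L l (mu + t *: w) HL tt a').
  congr (phi _ _ _); rewrite mulmxDl -scalemxAl /w rowE mulmxK //.
have RHS : \sum_(b : {ffun 'I_n.+1 -> 'I_4}) (\prod_(i < n.+1) L (a i) (b i)) * dmu phi l mu b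
    = \sum_b' \sum_k c b' * (L j k * D b' k).
  rewrite sum_ffun_split; apply: eq_bigr => b' _; apply: eq_bigr => k _.
  rewrite big_ord_recr /= extf_max -mulrA; congr (_ * (_ * _)).
    by apply: eq_bigr => i _; rewrite extf_widen.
  rewrite /dmu extf_max /D /Dk /pd /line; congr (derive1 _ 0).
  apply/funext => t; congr (phi _ _ _); apply/funext => i.
  exact: extf_widen.
rewrite LHS RHS; apply: eq_bigr => b' _; rewrite mulr_sumr; apply: eq_bigr => k _.
by rewrite /w mxE.
Qed.
Theorem proposition2 (R : realType) (n : nat) (phi : tfun R n) :
  inF phi -> inF (dmu phi).
Proof.
case=> Hs Hcov Hsym Hsym2; split.
- move=> a s.
  have := Hs (fun i => a (widen_ord (leqnSn n) i)) (rcons s (Some (a ord_max))).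
  by rewrite foldr_rcons.
- exact: cov_dmu.
- exact: Hsym2.
- exact: tsym_dd.
Qed.
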